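(* There is an absolute constant $C>0$ such that for every $a\in(-\infty,1)$ and all $\omega_1,\omega_2\in\mathbb D_a$, $$|r(\omega_1)-r(\omega_2)|\le C\,\|\rho(\omega_1-\omega_2)\|_{L^\infty}^{1/2}.$$
   Context: Let $\rho(x)=(1+|x|)^{-1/2}$ and $\eta_a=\frac{1}{2^{9/2}(4+|a|)^3}$. $\mathbb D_a$ is the set of continuous even functions $\omega$ on $\mathbb R$ with $\|\rho\omega\|_{L^\infty}<\infty$ such that $\omega(0)=1$; $(1-x^2)_+\le\omega(x)\le1$ for all $x$; $\omega$ is non-increasing on $[0,\infty)$; $s\mapsto\omega(\sqrt s)$ is convex on $[0,\infty)$; and the left derivative satisfies $\omega'_-(1/2)\le-\eta_a$. $r(\omega)=\frac1\pi\int_0^\infty\frac{\omega(0)-\omega(y)}{y^2}\,dy$. *)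

(* Defs.v *)
From HB Require Import structures.
From mathcomp Require Import all_boot all_order all_algebra.
From mathcomp Require Import all_classical all_reals all_analysis.
From mathcomp Require Import Rstruct Rstruct_topology.

Set Implicit Arguments. Unset Strict Implicit. Unset Printing Implicit Defensive.
Import Order.TTheory GRing.Theory Num.Theory.
Import numFieldNormedType.Exports.
Local Open Scope classical_set_scope.
Local Open Scope ring_scope.

Definition RR := Rdefinitions.R.

Definition rho (x : RR) : RR := (Num.sqrt (1 + `|x|))^-1.

Definition eta (a : RR) : RR := (((2 : RR) `^ (9%:R / 2)) * (4 + `|a|) ^+ 3)^-1.

(* || rho * f ||_{L^oo} for continuous f : the supremum of |rho f| *)
Definition wnorm (f : RR -> RR) : RR := sup [set `|rho x * f x| | x in [set: RR]].

Definition in_D (a : RR) (w : RR -> RR) : Prop :=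
  continuous w /\
  (forall x, w (- x) = w x) /\
  (exists M : RR, forall x, `|rho x * w x| <= M) /\
  w 0 = 1 /\
  (forall x, Num.max 0 (1 - x ^+ 2) <= w x /\ w x <= 1) /\
  (forall x y, 0 <= x -> x <= y -> w y <= w x) /\
  (* s |-> w (sqrt s) is convex on [0, +oo) *)
  (forall s t l, 0 <= s -> 0 <= t -> 0 <= l -> l <= 1 ->
     w (Num.sqrt (l * s + (1 - l) * t))
       <= l * w (Num.sqrt s) + (1 - l) * w (Num.sqrt t)) /\
  (exists2 d : RR, d <= - eta a &
     (fun x => (w x - w (2^-1)) / (x - 2^-1)) @ at_left (2^-1) --> d).
(* r(w) = 1/pi * int_0^oo (w(0) - w(y)) / y^2 dy  (Lebesgue integral,
   nonnegative integrand for w in D_a) *)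
Definition r (w : RR -> RR) : RR :=
  pi^-1 * fine (\int[@lebesgue_measure RR]_(y in `[0%R, +oo[%classic)
                   ((w 0 - w y) / y ^+ 2)%:E)%E.

(* Main.v *)
Require Import Defs.
From HB Require Import structures.
From mathcomp Require Import all_boot all_order all_algebra.
From mathcomp Require Import all_classical all_reals all_analysis.
From mathcomp Require Import Rstruct Rstruct_topology.
From mathcomp Require Import ring lra.
Import Order.TTheory GRing.Theory Num.Theory.
Local Open Scope ring_scope.

Module Aux.
Import numFieldNormedType.Exports.
Local Open Scope classical_set_scope.
Section S.
Context {R : realType}.

Definition hF (c c' : R) (y : R) : R := c / y^+2 + c' / (y * Num.sqrt y).
Definition FF (c c' : R) (y : R) : R := - (c * y^-1 + (2 * c') * (Num.sqrt y)^-1).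

Lemma FF_derive c c' (x : R) : 0 < x -> is_derive x 1 (FF c c') (hF c c' x).
Proof.
move=> x0.
have sx0 : 0 < Num.sqrt x by rewrite sqrtr_gt0.
have d1 : is_derive x (1:R) (fun y : R => y^-1) (- x ^- 2 *: 1).
  by apply: (@is_deriveV _ id) => //; rewrite gt_eqF.
have d2 : is_derive x (1:R) (fun y : R => (Num.sqrt y)^-1) (- (Num.sqrt x) ^- 2 *: (2 * Num.sqrt x)^-1).
  apply: (@is_deriveV _ Num.sqrt) => //; first by rewrite gt_eqF.
  exact: is_derive1_sqrt.
have := is_deriveN (is_deriveD (is_deriveZ c d1) (is_deriveZ (2 * c') d2)).
have -> : hF c c' x = - (c *: (- x ^- 2 *: 1) + (2 * c') *: (- (Num.sqrt x) ^- 2 *: (2 * Num.sqrt x)^-1)).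
  rewrite /hF /GRing.scale /=.
  have sq : Num.sqrt x ^+ 2 = x by rewrite sqr_sqrtr // ltW.
  rewrite sq.
  field. by rewrite !gt_eqF // sqrtr_gt0.
by [].
Qed.

Lemma hF_cont c c' (x : R) : 0 < x -> {for x, continuous (hF c c')}.
Proof.
move=> x0.
have sx0 : 0 < Num.sqrt x by rewrite sqrtr_gt0.
apply: cvgD.
  apply: cvgMl_tmp; apply: cvgV; first by rewrite expf_neq0 // gt_eqF.
  exact: exprn_continuous.
apply: cvgMl_tmp; apply: cvgV; first by rewrite mulf_neq0 // gt_eqF.
apply: cvgM; first exact: cvg_id.
exact: sqrt_continuous.
Qed.

Lemma FF_cvgy c c' : FF c c' x @[x --> +oo] --> (0:R).
Proof.
have h1 : (fun x : R => x^-1) x @[x --> +oo] --> (0:R).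
  apply/gtr0_cvgV0; first exact: (nbhs_pinfty_gt (num_real 0)).
  exact: cvg_id.
have h2 : (fun x : R => (Num.sqrt x)^-1) x @[x --> +oo] --> (0:R).
  apply/gtr0_cvgV0.
    by apply: filterS (nbhs_pinfty_gt (num_real 0)) => x hx; rewrite sqrtr_gt0.
  apply/cvgryPge => A.
  apply: filterS (nbhs_pinfty_ge (num_real (A^+2))) => x hx.
  by rewrite (le_trans (ler_norm A)) // -sqrtr_sqr ler_wsqrtr.
rewrite -oppr0 -[X in - X](addr0 0); apply: cvgN; apply: cvgD.
  rewrite -(mulr0 c); exact: cvgMl_tmp.
rewrite -(mulr0 (2 * c')); exact: cvgMl_tmp.
Qed.

Local Open Scope ereal_scope.
Lemma tail_int c c' (s : R) : (0 < s)%R -> (0 <= c)%R -> (0 <= c')%R ->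
  \int[lebesgue_measure]_(x in `[s, +oo[) (hF c c' x)%:E = (c / s + 2 * c' / Num.sqrt s)%:E.
Proof.
move=> s0 c0 c'0.
have hder : forall x, (s <= x)%R -> is_derive x 1%R (FF c c') (hF c c' x).
  by move=> x sx; apply: FF_derive; exact: lt_le_trans sx.
rewrite (@ge0_continuous_FTC2y _ (hF c c') (FF c c') s 0).
- rewrite /FF sub0e -EFinN opprK; by congr EFin.
- move=> x sx; have x0 : (0 < x)%R := lt_le_trans s0 sx.
  by rewrite /hF addr_ge0 // divr_ge0 // ?mulr_ge0 ?sqrtr_ge0 // ltW.
- apply: continuous_in_subspaceT => x; rewrite inE /= in_itv /= andbT => sx.
  by apply: hF_cont; exact: lt_le_trans sx.
- exact: FF_cvgy.
- by move=> x sx; case: (hder _ (ltW sx)).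
- have : {within `[s, +oo[, continuous (FF c c')}.
    apply: derivable_within_continuous => x; rewrite in_itv /= andbT => sx.
    by case: (hder _ sx).
  by move/continuous_within_itvcyP => [].
- move=> x; rewrite in_itv /= andbT => sx.
  by rewrite derive1E; apply: derive_val; apply: hder; exact: ltW.
Qed.


Lemma hF_meas c c' (s : R) : (0 < s)%R -> measurable_fun `[s, +oo[ (hF c c').
Proof.
move=> s0; apply/measurable_realfun.measurable_fun_itv_obnd_cbndP.
apply: measurable_realfun.open_continuous_measurable_fun => // x; rewrite inE /= in_itv /= andbT => sx.
by apply: hF_cont; exact: lt_trans sx.
Qed.

Lemma key_bound (g : R -> R) (s c c' : R) : (0 < s)%R -> (0 <= c)%R -> (0 <= c')%R ->
  measurable_fun (`[0%R, +oo[ : set R) g ->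
  (forall y, (0 <= y)%R -> (0 <= g y)%R) ->
  (forall y, (0 <= y)%R -> (y < s)%R -> (g y <= 1)%R) ->
  (forall y, (s <= y)%R -> (g y <= hF c c' y)%R) ->
  \int[lebesgue_measure]_(y in `[0%R, +oo[) (g y)%:E <= (s + (c / s + 2 * c' / Num.sqrt s))%:E.
Proof.
move=> s0 c0 c'0 mg g0 g1 g2.
have E : `[0%R, +oo[%classic = [set` Interval (BLeft 0%R) (BLeft s)] `|` [set` Interval (BLeft s) +oo%O].
  by apply: itv_bndbnd_setU; rewrite bnd_simp // ltW.
have sub : [set` Interval (BLeft 0%R) (BLeft s)] `|` [set` Interval (BLeft s) +oo%O] `<=` `[0%R, +oo[.
  by rewrite -E.
rewrite E ge0_integral_setU //=; first last.
- rewrite disj_set2E; apply/eqP/seteqP; split => x //= [].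
  by rewrite !in_itv /= andbT => /andP[_ xs] sx; move: (lt_le_trans xs sx); rewrite ltxx.
- move=> x hx; have := sub x hx; rewrite /= in_itv /= andbT => x0; rewrite lee_fin; exact: g0.
- by apply/measurable_realfun.measurable_EFinP; apply: measurable_funS mg.
rewrite EFinD; apply: leeD.
- have -> : s%:E = \int[lebesgue_measure]_(x in `[0%R, s[) (cst 1) x.
    by rewrite integral_cst //= lebesgue_measure_itv /= lte_fin s0 mul1e oppr0 adde0.
  apply: ge0_le_integral => //.
  + by move=> x; rewrite /= in_itv /= => /andP[x0 _]; rewrite lee_fin g0.
  + apply/measurable_realfun.measurable_EFinP; apply: measurable_funS mg => //.
    by move=> x; rewrite /= !in_itv /= => /andP[-> _].
  + by move=> x; rewrite /= in_itv /= => /andP[x0 xs]; rewrite lee_fin g1.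
- rewrite -tail_int //; apply: ge0_le_integral => //.
  + by move=> x; rewrite /= in_itv /= andbT => sx; rewrite lee_fin g0 // (le_trans (ltW s0)).
  + apply/measurable_realfun.measurable_EFinP; apply: measurable_funS mg => //.
    by move=> x; rewrite /= !in_itv /= !andbT => /(le_trans (ltW s0)).
  + by apply/measurable_realfun.measurable_EFinP; apply: hF_meas.
  + by move=> x; rewrite /= in_itv /= andbT => sx; rewrite lee_fin g2.
Qed.


Local Close Scope ereal_scope.
Definition fw (w : R -> R) (y : R) : R := (w 0 - w y) / y ^+ 2.

Definition wbnd (w : R -> R) := continuous w /\ w 0 = 1 /\
  (forall x, Num.max 0 (1 - x ^+ 2) <= w x /\ w x <= 1)%R.

Lemma fw_meas w : continuous w -> measurable_fun (`[0%R, +oo[ : set R) (fw w).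
Proof.
move=> cw; apply/measurable_realfun.measurable_fun_itv_obnd_cbndP.
apply: measurable_realfun.open_continuous_measurable_fun => // x.
rewrite inE /= in_itv /= andbT => x0.
apply: cvgM; first by apply: cvgB; [exact: cvg_cst | exact: cw].
apply: cvgV; first by rewrite expf_neq0 // gt_eqF.
exact: exprn_continuous.
Qed.

Lemma sq_le (w : R -> R) y : wbnd w -> (`|1 - w y| <= y ^+ 2)%R.
Proof.
move=> [_ [_ b]]; have [b1 b2] := b y.
rewrite ger0_norm ?subr_ge0 //.
move: b1; rewrite ge_max => /andP[_].
move=> h; lra.
Qed.

Lemma div_le1 (a y : R) : (`|a| <= y ^+ 2 -> `|a| / y ^+ 2 <= 1)%R.
Proof.
move=> h; have [->|y0] := eqVneq y 0.
  by rewrite expr0n /= invr0 mulr0.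
by rewrite ler_pdivrMr ?mul1r // lt_neqAle eq_sym sqrf_eq0 y0 sqr_ge0.
Qed.

Lemma fw_ge0 w y : wbnd w -> (0 <= fw w y)%R.
Proof.
move=> [cw [w0 b]]; rewrite /fw w0 divr_ge0 ?sqr_ge0 // subr_ge0; exact: (b y).2.
Qed.

Lemma fw_le1 w y : wbnd w -> (fw w y <= 1)%R.
Proof.
move=> hw; have := div_le1 _ _ (sq_le w y hw).
case: hw => _ [w0 b]; rewrite /fw w0 ger0_norm // subr_ge0; exact: (b y).2.
Qed.

Lemma w_ge0 w y : wbnd w -> (0 <= w y)%R.
Proof. by move=> [_ [_ b]]; have [b1 _] := b y; move: b1; rewrite ge_max => /andP[]. Qed.

Lemma fw_int w : wbnd w ->
  (\int[lebesgue_measure]_(y in `[0%R, +oo[) (fw w y)%:E <= 2%:E)%E.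
Proof.
move=> hw; have [cw [w0 b]] := hw.
have := @key_bound (fw w) 1 1 0 ltr01 ler01 (lexx 0) (fw_meas w cw)
  (fun y _ => fw_ge0 w y hw) (fun y _ _ => fw_le1 w y hw).
rewrite sqrtr1 !divr1 mulr0 addr0 => -> //.
move=> y y1; have y0 : (0 < y)%R := lt_le_trans ltr01 y1.
rewrite /hF /fw w0 mul0r addr0 ler_wpM2r ?invr_ge0 ?sqr_ge0 //.
by rewrite lerBlDr lerDl (w_ge0 w y hw).
Qed.

Lemma fw_integrable w : wbnd w ->
  lebesgue_measure.-integrable (`[0%R, +oo[ : set R) (EFin \o fw w).
Proof.
move=> hw; apply/integrableP; split.
  by apply/measurable_realfun.measurable_EFinP; apply: fw_meas; case: hw.
apply: (le_lt_trans _ (ltry 2)) => /=.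
apply: le_trans _ (fw_int w hw); rewrite le_eqVlt; apply/orP; left; apply/eqP.
apply: eq_integral => y _; rewrite ger0_norm //; exact: fw_ge0.
Qed.


Lemma fw_diff w1 w2 y : wbnd w1 -> wbnd w2 ->
  `|fw w1 y - fw w2 y| = `|w1 y - w2 y| / y ^+ 2.
Proof.
move=> [_ [e1 _]] [_ [e2 _]]; rewrite /fw e1 e2 -mulrBl normrM normfV.
rewrite (ger0_norm (sqr_ge0 y)); congr (_ / _); rewrite -normrN; congr `|_|.
ring.
Qed.

Lemma w_diff_sq w1 w2 y : wbnd w1 -> wbnd w2 -> `|w1 y - w2 y| <= y ^+ 2.
Proof.
move=> h1 h2.
have a := sq_le w1 y h1; have b := sq_le w2 y h2.
have c := (h1.2.2 y).2; have e := (h2.2.2 y).2.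
rewrite ger0_norm ?subr_ge0 // in a; rewrite ger0_norm ?subr_ge0 // in b.
rewrite ler_norml; apply/andP; split; lra.
Qed.

Lemma tail_pt (d y : R) : 0 <= d -> 0 < y ->
  d * Num.sqrt (1 + `|y|) / y ^+ 2 <= hF d d y.
Proof.
move=> d0 y0.
have [t [t0 ey]] : exists t, 0 < t /\ y = t ^+ 2.
  by exists (Num.sqrt y); rewrite sqrtr_gt0 y0 sqr_sqrtr // ltW.
subst y; rewrite /hF ger0_norm ?sqr_ge0 // sqrtr_sqr ger0_norm ?(ltW t0) //.
have -> : d / (t ^+ 2) ^+ 2 + d / (t ^+ 2 * t) = d * (1 + t) / (t ^+ 2) ^+ 2.
  by field; rewrite gt_eqF.
rewrite ler_wpM2r ?invr_ge0 ?exprn_ge0 ?sqr_ge0 ?(ltW t0) // ler_wpM2l //.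
rewrite -ler_sqr ?nnegrE ?sqrtr_ge0 ?addr_ge0 ?(ltW t0) // sqr_sqrtr ?addr_ge0 ?sqr_ge0 //.
nra.
Qed.


Lemma diff_int w1 w2 (d : R) : wbnd w1 -> wbnd w2 -> 0 < d -> d <= 1 ->
  (forall x, `|w1 x - w2 x| <= d * Num.sqrt (1 + `|x|)) ->
  (\int[lebesgue_measure]_(y in `[0%R, +oo[) (`|fw w1 y - fw w2 y|)%:E
     <= (4 * Num.sqrt d)%:E)%E.
Proof.
move=> h1 h2 d0 d1 hd.
have s0 : 0 < Num.sqrt d by rewrite sqrtr_gt0.
apply: le_trans (@key_bound (fun y => `|fw w1 y - fw w2 y|) (Num.sqrt d) d d s0 (ltW d0) (ltW d0) _ _ _ _) _.
- apply: measurableT_comp; first exact: measurable_realfun.normr_measurable.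
  by apply: measurable_realfun.measurable_funB; apply: fw_meas; [case: h1|case: h2].
- by move=> y _.
- move=> y _ _; rewrite fw_diff //; apply: div_le1; exact: w_diff_sq.
- move=> y sy; have y0 : 0 < y := lt_le_trans s0 sy.
  rewrite fw_diff //; apply: le_trans _ (tail_pt _ _ (ltW d0) y0).
  by rewrite ler_wpM2r ?invr_ge0 ?sqr_ge0.
rewrite lee_fin.
have [u [u0 du]] : exists u, 0 < u /\ d = u ^+ 4.
  exists (Num.sqrt (Num.sqrt d)); rewrite !sqrtr_gt0 d0; split => //.
  by rewrite (_ : 4 = 2 * 2)%N // exprM !sqr_sqrtr ?sqrtr_ge0 // ltW.
subst d.
have e1 : Num.sqrt (u ^+ 4) = u ^+ 2.
  by rewrite (_ : 4 = 2 * 2)%N // exprM sqrtr_sqr ger0_norm // sqr_ge0.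
have e2 : Num.sqrt (u ^+ 2) = u by rewrite sqrtr_sqr ger0_norm // ltW.
rewrite e1 e2.
have -> : u ^+ 2 + (u ^+ 4 / u ^+ 2 + 2 * u ^+ 4 / u) = 2 * u ^+ 2 + 2 * u ^+ 3.
  by field; rewrite gt_eqF.
have u1 : u <= 1.
  rewrite leNgt; apply/negP => u1; move: d1; rewrite leNgt => /negP; apply.
  by rewrite exprn_egt1.
nra.
Qed.


Definition Iw w := (\int[lebesgue_measure]_(y in `[0%R, +oo[) (fw w y)%:E)%E.

Lemma Iw_ge0 w : wbnd w -> (0 <= Iw w)%E.
Proof. by move=> hw; apply: integral_ge0 => y _; rewrite lee_fin; exact: fw_ge0. Qed.

Lemma Iw_fin w : wbnd w -> Iw w \is a fin_num.
Proof.
move=> hw; rewrite ge0_fin_numE ?Iw_ge0 //.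
exact: le_lt_trans (fw_int w hw) (ltry 2).
Qed.

Lemma fine_Iw w : wbnd w -> 0 <= fine (Iw w) <= 2.
Proof.
move=> hw; apply/andP; split; first by apply: fine_ge0; exact: Iw_ge0.
by rewrite -lee_fin fineK ?Iw_fin //; exact: fw_int.
Qed.

Lemma fine_big w1 w2 : wbnd w1 -> wbnd w2 -> `|fine (Iw w1) - fine (Iw w2)| <= 2.
Proof.
move=> h1 h2; have /andP[a b] := fine_Iw w1 h1; have /andP[c e] := fine_Iw w2 h2.
rewrite ler_norml; apply/andP; split; lra.
Qed.

Lemma fine_small w1 w2 (d : R) : wbnd w1 -> wbnd w2 -> 0 < d -> d <= 1 ->
  (forall x, `|w1 x - w2 x| <= d * Num.sqrt (1 + `|x|)) ->
  `|fine (Iw w1) - fine (Iw w2)| <= 4 * Num.sqrt d.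
Proof.
move=> h1 h2 d0 d1 hd.
have f1 := Iw_fin w1 h1; have f2 := Iw_fin w2 h2.
rewrite -fineB //.
have eX : (Iw w1 - Iw w2 = \int[lebesgue_measure]_(y in `[0%R, +oo[) ((fw w1 y)%:E - (fw w2 y)%:E))%E.
  by rewrite integralB_EFin //; apply: fw_integrable.
have fX : (Iw w1 - Iw w2)%E \is a fin_num by rewrite fin_numB f1 f2.
rewrite -lee_fin -abse_EFin fineK //.
apply: le_trans (diff_int _ _ _ h1 h2 d0 d1 hd).
rewrite eX; apply: le_trans (le_abse_integral _ _ _) _ => //.
- apply/measurable_realfun.measurable_EFinP.
  by apply: measurable_realfun.measurable_funB; apply: fw_meas; [case: h1|case: h2].
Qed.

End S.
End Aux.
Import Aux.

Theorem mainTheorem8 :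
  exists C : RR, 0 < C /\
    forall (a : RR) (w1 w2 : RR -> RR), a < 1 ->
      in_D a w1 -> in_D a w2 ->
      `|r w1 - r w2| <= C * Num.sqrt (wnorm (fun x => w1 x - w2 x)).
Proof.
exists 4; split; first by [].
move=> a w1 w2 _ H1 H2.
have toW : forall w, in_D a w -> wbnd (R:=Rdefinitions.R) w.
  by move=> w [cw [_ [_ [w0 [b _]]]]]; split => //; split.
have hb1 := toW _ H1; have hb2 := toW _ H2.
have wl1 : forall w, in_D a w -> forall y, 0 <= w y <= 1.
  move=> w Hw y; apply/andP; split; first exact: (w_ge0 w y (toW _ Hw)).
  by have [_ [_ /(_ y) []]] := toW _ Hw.
have hub : forall x, `|rho x * (w1 x - w2 x)| <= wnorm (fun x => w1 x - w2 x).
  move=> x; apply: sup_upper_bound; last by exists x.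
  split; first by exists (`|rho 0 * (w1 0 - w2 0)|), 0.
  exists 1 => _ [y _ <-].
  rewrite normrM; apply: mulr_ile1 => //.
    rewrite /rho ger0_norm ?invr_ge0 ?sqrtr_ge0 // invf_le1 ?sqrtr_gt0 ?ltr_pwDl //.
    by rewrite -{1}sqrtr1 ler_wsqrtr // lerDl.
  have /andP[a1 b1] := wl1 _ H1 y; have /andP[a2 b2] := wl1 _ H2 y.
  rewrite ler_norml; apply/andP; split; lra.
set d := wnorm _.
have hd : forall x, `|w1 x - w2 x| <= d * Num.sqrt (1 + `|x|).
  move=> x; have q0 : 0 < Num.sqrt (1 + `|x|) by rewrite sqrtr_gt0 ltr_pwDl.
  have := hub x; rewrite normrM /rho ger0_norm ?invr_ge0 ?sqrtr_ge0 // => h.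
  by rewrite -ler_pdivrMr // mulrC.
have d0 : 0 <= d := le_trans (normr_ge0 _) (hub 0).
have rE : forall w, r w = pi^-1 * fine (Iw (R:=Rdefinitions.R) w) by [].
have [de|dn0] := eqVneq d 0.
  have e : w1 = w2.
    apply: funext => x; apply/eqP; rewrite -subr_eq0 -normr_le0.
    by have := hd x; rewrite de mul0r.
  by rewrite e subrr normr0 mulr_ge0 // sqrtr_ge0.
have dpos : 0 < d by rewrite lt_neqAle eq_sym dn0 d0.
rewrite !rE -mulrBr normrM gtr0_norm ?invr_gt0 ?pi_gt0 //.
have pi1 : pi^-1 <= 1 :> RR.
  rewrite invf_le1 ?pi_gt0 //; have := @pi_ge2 Rdefinitions.R; lra.
have [d1|d1] := lerP d 1.
  rewrite -[4 * _]mul1r; apply: ler_pM => //; first by rewrite invr_ge0 ltW ?pi_gt0.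
  exact: (fine_small _ _ _ hb1 hb2 dpos d1 hd).
apply: (@le_trans _ _ (1 * 2)).
  apply: ler_pM => //; first by rewrite invr_ge0 ltW ?pi_gt0.
  exact: (fine_big _ _ hb1 hb2).
have : 1 <= Num.sqrt d by rewrite -sqrtr1 ler_wsqrtr // ltW.
lra.
Qed.
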